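(* Let \(A\) be a geometrically fast set of positive bumps with a fixed marking witnessing this. Suppose \(x_0,x_1\in I\) and for each \(i<2\), \(\mathtt{u}_i\) is an \(A\)-word locally reduced at \(x_i\) with \(x_i\notin\operatorname{src}(\mathtt{u}_i)\). If \(|\mathtt{u}_0|\le|\mathtt{u}_1|\) and \(x_0u_0=x_1u_1\), then \(\mathtt{u}_0\) is a suffix of \(\mathtt{u}_1\). In particular, if \(t\in I\) lies in none of the feet of elements of \(A^{\pm}\), and \(\mathtt{u}\), \(\mathtt{v}\) are \(A\)-words locally reduced at \(t\) with \(tu=tv\), then \(\mathtt{u}=\mathtt{v}\).
   Context: \(I=[0,1]\); homeomorphisms act on the right. A positive bump is an element of \(\operatorname{Homeo}_+(I)\) whose support \(\{t:ta\neq t\}\) is a single open interval \((x,y)\) on which \(ta>t\); \(x\), \(y\) are its left and right transition points. \(A\) is geometrically proper if no point is a left transition point of two distinct elements, nor a right transition point of two distinct elements. A marking assigns each \(a\in A\) a marker \(t\in\operatorname{supt}(a)\); for \(a\) with support \((x,y)\), \(\operatorname{src}(a)=(x,t)\), \(\operatorname{dest}(a)=[ta,y)\), \(\operatorname{src}(a^{-1})=\operatorname{dest}(a)\), \(\operatorname{dest}(a^{-1})=\operatorname{src}(a)\); these are the feet. \(A\) is geometrically fast if geometrically proper and the marking makes the feet pairwise disjoint. \(A^{\pm}=A\cup A^{-1}\). An \(A\)-word is a finite string over \(A^{\pm}\); \(|\mathtt{u}|\) is its length, \(u\) its evaluation (acting on the right). \(\mathtt{w}\) is locally reduced at \(t\)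 if it is freely reduced and for every prefix \(\mathtt{ua}\) (\(a\in A^\pm\)), \(tua\neq tu\). For a nonempty word, \(\operatorname{src}(\mathtt{w})\) is the source of its first symbol; \(\operatorname{src}(\varepsilon)=\emptyset\). *)

(* Defs.v *)
From Stdlib Require Import Reals List.
Import ListNotations.
Open Scope R_scope.

Definition inI (t : R) : Prop := 0 <= t <= 1.

(* f : I -> I is an orientation-preserving homeomorphism with inverse g
   (behaviour outside I is irrelevant). *)
Definition contI (f : R -> R) : Prop :=
  forall t, inI t -> forall eps, 0 < eps ->
    exists delta, 0 < delta /\
      forall s, inI s -> Rabs (s - t) < delta -> Rabs (f s - f t) < eps.

Definition is_homeo_plus (f g : R -> R) : Prop :=
  (forall t, inI t -> inI (f t)) /\
  (forall t, inI t -> inI (g t)) /\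
  (forall t, inI t -> g (f t) = t) /\
  (forall t, inI t -> f (g t) = t) /\
  contI f /\ contI g /\
  (forall s t, inI s -> inI t -> s < t -> f s < f t).

Definition is_pos_bump (f : R -> R) (x y : R) : Prop :=
  0 <= x /\ x < y /\ y <= 1 /\
  (forall t, inI t -> (f t <> t <-> x < t < y)) /\
  (forall t, x < t < y -> t < f t).

Section Words.
(* A is given as an indexed family a : J -> bumps, with inverses ainv,
   transition points lo j, hi j, and marking m j. *)
Context {J : Type}.
Variables a ainv : J -> R -> R.
Variables lo hi m : J -> R.

(* letters of A^{+-}: (j,false) = a_j, (j,true) = a_j^{-1} *)
Definition letter := (J * bool)%type.
Definition word := list letter.

Definition act (l : letter) (t : R) : R :=
  if snd l then ainv (fst l) t else a (fst l) t.

(* right action: t . (l1 l2 ... ln) = (...((t l1) l2)...) ln *)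
Definition eval (t : R) (w : word) : R :=
  fold_left (fun s l => act l s) w t.

Definition src_pos (j : J) (t : R) : Prop := lo j < t < m j.
Definition dest_pos (j : J) (t : R) : Prop := a j (m j) <= t < hi j.

Definition lsrc (l : letter) : R -> Prop :=
  if snd l then dest_pos (fst l) else src_pos (fst l).
Definition ldest (l : letter) : R -> Prop :=
  if snd l then src_pos (fst l) else dest_pos (fst l).

Definition wsrc (w : word) (t : R) : Prop :=
  match w with [] => False | l :: _ => lsrc l t end.

Definition in_some_foot (t : R) : Prop :=
  exists l : letter, lsrc l t \/ ldest l t.

Definition geom_proper : Prop :=
  forall j k, (lo j = lo k -> j = k) /\ (hi j = hi k -> j = k).

Definition foot (f : J * bool) : R -> Prop :=
  if snd f then dest_pos (fst f) else src_pos (fst f).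

Definition geom_fast : Prop :=
  geom_proper /\
  (forall j, lo j < m j < hi j) /\
  (forall f g : J * bool, f <> g -> forall t, ~ (foot f t /\ foot g t)).

Definition inverse_letters (l l' : letter) : Prop :=
  fst l = fst l' /\ snd l' = negb (snd l).

Definition freely_reduced (w : word) : Prop :=
  forall p q l l', w = p ++ l :: l' :: q -> ~ inverse_letters l l'.

Definition loc_reduced (t : R) (w : word) : Prop :=
  freely_reduced w /\
  forall u l q, w = u ++ l :: q -> act l (eval t u) <> eval t u.

Definition is_suffix (u w : word) : Prop := exists p, w = p ++ u.

End Words.

(* Main.v *)
Require Import Defs.
From Stdlib Require Import Reals List Lra Lia Classical.
Open Scope R_scope.
Import ListNotations.

Lemma eval_cons {J : Type} (a ainv : J -> R -> R) x l w :
  eval a ainv x (l :: w) = eval a ainv (act a ainv l x) w.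
Proof. reflexivity. Qed.

Lemma eval_app {J : Type} (a ainv : J -> R -> R) x p q :
  eval a ainv x (p ++ q) = eval a ainv (eval a ainv x p) q.
Proof. unfold eval. apply fold_left_app. Qed.

Lemma act_inI {J : Type} (a ainv : J -> R -> R) :
  (forall j, is_homeo_plus (a j) (ainv j)) ->
  forall l x, inI x -> inI (act a ainv l x).
Proof.
  intros Hh [j b] x Hx. destruct (Hh j) as (H1 & H2 & _). unfold act; simpl.
  destruct b; auto.
Qed.

Lemma act_inj {J : Type} (a ainv : J -> R -> R) :
  (forall j, is_homeo_plus (a j) (ainv j)) ->
  forall l x y, inI x -> inI y -> act a ainv l x = act a ainv l y -> x = y.
Proof.
  intros Hh [j b] x y Hx Hy E. destruct (Hh j) as (H1 & H2 & H3 & H4 & _).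
  unfold act in E; simpl in E. destruct b.
  - rewrite <- (H4 x Hx), <- (H4 y Hy), E. reflexivity.
  - rewrite <- (H3 x Hx), <- (H3 y Hy), E. reflexivity.
Qed.

Lemma eval_inI {J : Type} (a ainv : J -> R -> R) :
  (forall j, is_homeo_plus (a j) (ainv j)) ->
  forall w x, inI x -> inI (eval a ainv x w).
Proof.
  intros Hh w. induction w as [|l w IH]; intros x Hx; simpl; auto.
  apply IH. apply act_inI; auto.
Qed.

Lemma eval_inj {J : Type} (a ainv : J -> R -> R) :
  (forall j, is_homeo_plus (a j) (ainv j)) ->
  forall w x y, inI x -> inI y -> eval a ainv x w = eval a ainv y w -> x = y.
Proof.
  intros Hh w. induction w as [|l w IH]; intros x y Hx Hy E; simpl in E; auto.
  apply (act_inj a ainv Hh l); auto. apply IH; auto; apply act_inI; auto.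
Qed.

Lemma ldest_foot {J : Type} (a : J -> R -> R) lo hi m (l : J * bool) t :
  ldest a lo hi m l t = foot a lo hi m (fst l, negb (snd l)) t.
Proof. destruct l as [j []]; reflexivity. Qed.

Lemma lsrc_foot {J : Type} (a : J -> R -> R) lo hi m (l : J * bool) t :
  lsrc a lo hi m l t = foot a lo hi m l t.
Proof. destruct l as [j []]; reflexivity. Qed.

Lemma foot_eq {J : Type} (a : J -> R -> R) lo hi m :
  geom_fast a lo hi m -> forall f g t, foot a lo hi m f t -> foot a lo hi m g t -> f = g.
Proof.
  intros (_ & _ & Hd) f g t Hf Hg. apply NNPP. intro N. exact (Hd f g N t (conj Hf Hg)).
Qed.

Lemma ldest_eq {J : Type} (a : J -> R -> R) lo hi m :
  geom_fast a lo hi m -> forall l l' t, ldest a lo hi m l t -> ldest a lo hi m l' t -> l = l'.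
Proof.
  intros Hg [j b] [j' b'] t H1 H2. rewrite ldest_foot in H1, H2.
  pose proof (foot_eq a lo hi m Hg _ _ _ H1 H2) as E. simpl in E. injection E; intros.
  subst. destruct b, b'; simpl in *; congruence.
Qed.

Lemma one_step {J : Type} (a ainv : J -> R -> R) lo hi m :
  (forall j, is_homeo_plus (a j) (ainv j)) ->
  (forall j, is_pos_bump (a j) (lo j) (hi j)) ->
  geom_fast a lo hi m ->
  forall l x, inI x -> act a ainv l x <> x -> ~ lsrc a lo hi m l x ->
  ldest a lo hi m l (act a ainv l x).
Proof.
  intros Hh Hb Hg [j b] x Hx Hne Hs.
  destruct (Hh j) as (H1 & H2 & H3 & H4 & _ & _ & Hmono).
  destruct (Hb j) as (Hl0 & Hlh & Hh1 & Hsupp & Hpos).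
  destruct Hg as (_ & Hm & _). specialize (Hm j).
  assert (Ilo : inI (lo j)) by (unfold inI; lra).
  assert (Ihi : inI (hi j)) by (unfold inI; lra).
  assert (Im : inI (m j)) by (unfold inI; lra).
  assert (Flo : a j (lo j) = lo j).
  { destruct (Req_dec (a j (lo j)) (lo j)) as [e|e]; auto.
    apply (Hsupp _ Ilo) in e. lra. }
  assert (Fhi : a j (hi j) = hi j).
  { destruct (Req_dec (a j (hi j)) (hi j)) as [e|e]; auto.
    apply (Hsupp _ Ihi) in e. lra. }
  assert (Mle : forall s t, inI s -> inI t -> s <= t -> a j s <= a j t).
  { intros s t Is It st. destruct (Req_dec s t) as [->|n]; [lra|].
    left. apply Hmono; auto. lra. }
  unfold act, lsrc, ldest, src_pos, dest_pos in *; simpl in *.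
  destruct b.
  -
    assert (Hx' : lo j < x < hi j).
    { apply Hsupp; auto. intro e. apply Hne. rewrite <- e at 1. apply H3; auto. }
    assert (Iy : inI (ainv j x)) by auto.
    assert (xam : x < a j (m j)) by (apply Rnot_le_lt; intro c; apply Hs; lra).
    split.
    + apply Rnot_le_lt; intro c. pose proof (Mle _ _ Iy Ilo c). rewrite H4 in H; auto. lra.
    + apply Rnot_le_lt; intro c. pose proof (Mle _ _ Im Iy c). rewrite H4 in H; auto. lra.
  - assert (Hx' : lo j < x < hi j) by (apply Hsupp; auto).
    assert (mx : m j <= x) by (apply Rnot_lt_le; intro c; apply Hs; lra).
    split.
    + apply Mle; auto.
    + rewrite <- Fhi. apply Hmono; auto. lra.
Qed.

Lemma loc_reduced_tail {J : Type} (a ainv : J -> R -> R) x l w :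
  loc_reduced a ainv x (l :: w) -> loc_reduced a ainv (act a ainv l x) w.
Proof.
  intros [Hf Hl]. split.
  - intros p q l1 l2 E. apply (Hf (l :: p) q). rewrite E. reflexivity.
  - intros u l1 q E. apply (Hl (l :: u) l1 q). rewrite E. reflexivity.
Qed.

Lemma loc_reduced_prefix {J : Type} (a ainv : J -> R -> R) x w q :
  loc_reduced a ainv x (w ++ q) -> loc_reduced a ainv x w.
Proof.
  intros [Hf Hl]. split.
  - intros p q' l1 l2 E. apply (Hf p (q' ++ q)). rewrite E, <- app_assoc. reflexivity.
  - intros u l1 q' E. apply (Hl u l1 (q' ++ q)). rewrite E, <- app_assoc. reflexivity.
Qed.

Lemma wsrc_prefix {J : Type} (a : J -> R -> R) lo hi m (w q : list (J * bool)) x :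
  ~ wsrc a lo hi m (w ++ q) x -> ~ wsrc a lo hi m w x.
Proof. destruct w; simpl; auto. Qed.

Lemma dest_last {J : Type} (a ainv : J -> R -> R) lo hi m :
  (forall j, is_homeo_plus (a j) (ainv j)) ->
  (forall j, is_pos_bump (a j) (lo j) (hi j)) ->
  geom_fast a lo hi m ->
  forall w x, inI x -> loc_reduced a ainv x w -> ~ wsrc a lo hi m w x ->
  forall p l, w = p ++ [l] -> ldest a lo hi m l (eval a ainv x w).
Proof.
  intros Hh Hb Hg w. induction w as [|l1 w IH]; intros x Hx Hr Hs p l E.
  - destruct p; discriminate.
  - destruct p as [|l2 p]; simpl in E; injection E; intros E1 E2; subst.
    + simpl. apply one_step; auto.
      destruct Hr as [_ Hl]. apply (Hl [] l []). reflexivity.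
    + rewrite eval_cons. apply (IH _ (act_inI a ainv Hh l2 x Hx) (loc_reduced_tail _ _ _ _ _ Hr)) with (p := p); auto.
      destruct (p ++ [l]) as [|l' w'] eqn:Ew.
      * destruct p; discriminate.
      * simpl. rewrite lsrc_foot. intro Hsr.
        assert (Hd : ldest a lo hi m l2 (act a ainv l2 x)).
        { apply one_step; auto. destruct Hr as [_ Hl]. apply (Hl [] l2 (l' :: w')). reflexivity. }
        rewrite ldest_foot in Hd.
        pose proof (foot_eq a lo hi m Hg _ _ _ Hd Hsr) as Ef.
        destruct Hr as [Hf _]. apply (Hf [] w' l2 l'); [reflexivity|].
        rewrite <- Ef. split; reflexivity.
Qed.

Lemma part1 {J : Type} (a ainv : J -> R -> R) lo hi m :
  (forall j, is_homeo_plus (a j) (ainv j)) ->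
  (forall j, is_pos_bump (a j) (lo j) (hi j)) ->
  geom_fast a lo hi m ->
  (forall (x0 x1 : R) (u0 u1 : word (J:=J)),
     inI x0 -> inI x1 ->
     loc_reduced a ainv x0 u0 -> loc_reduced a ainv x1 u1 ->
     ~ wsrc a lo hi m u0 x0 -> ~ wsrc a lo hi m u1 x1 ->
     (length u0 <= length u1)%nat ->
     eval a ainv x0 u0 = eval a ainv x1 u1 ->
     is_suffix u0 u1).
Proof.
  intros Hh Hb Hg x0 x1 u0. revert x0 x1.
  induction u0 as [|l0 u0 IH] using rev_ind; intros x0 x1 u1 Hx0 Hx1 Hr0 Hr1 Hs0 Hs1 Hlen E.
  - exists u1. rewrite app_nil_r. reflexivity.
  - induction u1 as [|l1 u1 _] using rev_ind.
    + rewrite length_app in Hlen. simpl in Hlen. lia.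
    + pose proof (dest_last a ainv lo hi m Hh Hb Hg _ _ Hx0 Hr0 Hs0 u0 l0 eq_refl) as D0.
      pose proof (dest_last a ainv lo hi m Hh Hb Hg _ _ Hx1 Hr1 Hs1 u1 l1 eq_refl) as D1.
      rewrite E in D0. pose proof (ldest_eq a lo hi m Hg _ _ _ D0 D1) as El. subst l1.
      rewrite !eval_app in E. simpl in E.
      apply act_inj in E; auto; try apply eval_inI; auto.
      destruct (IH x0 x1 u1 Hx0 Hx1 (loc_reduced_prefix _ _ _ _ _ Hr0)
                  (loc_reduced_prefix _ _ _ _ _ Hr1) (wsrc_prefix _ _ _ _ _ _ _ Hs0)
                  (wsrc_prefix _ _ _ _ _ _ _ Hs1)) as [p Ep]; auto.
      * rewrite !length_app in Hlen. simpl in Hlen. lia.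
      * exists p. rewrite Ep, app_assoc. reflexivity.
Qed.

Lemma part2_le {J : Type} (a ainv : J -> R -> R) lo hi m :
  (forall j, is_homeo_plus (a j) (ainv j)) ->
  (forall j, is_pos_bump (a j) (lo j) (hi j)) ->
  geom_fast a lo hi m ->
  forall (t : R) (u v : word (J:=J)),
     inI t -> ~ in_some_foot a lo hi m t ->
     loc_reduced a ainv t u -> loc_reduced a ainv t v ->
     (length u <= length v)%nat ->
     eval a ainv t u = eval a ainv t v ->
     u = v.
Proof.
  intros Hh Hb Hg t u v Ht Hf Hu Hv Hlen E.
  assert (Hw : forall w, ~ wsrc a lo hi m w t).
  { intros [|l w]; simpl; auto. intro H. apply Hf. exists l. auto. }
  destruct (part1 a ainv lo hi m Hh Hb Hg t t u v Ht Ht Hu Hv (Hw u) (Hw v) Hlen E) as [p Ep].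
  subst v. rewrite eval_app in E.
  apply eval_inj in E; auto; try apply eval_inI; auto.
  destruct p as [|l p'] using rev_ind; [reflexivity|].
  exfalso.
  pose proof (dest_last a ainv lo hi m Hh Hb Hg (p' ++ [l]) t Ht (loc_reduced_prefix _ _ _ _ _ Hv) (Hw _) p' l eq_refl) as D.
  rewrite <- E in D. apply Hf. exists l. auto.
Qed.

Theorem lemma5p4 (J : Type) (a ainv : J -> R -> R) (lo hi m : J -> R) :
  (forall j, is_homeo_plus (a j) (ainv j)) ->
  (forall j, is_pos_bump (a j) (lo j) (hi j)) ->
  geom_fast a lo hi m ->
  (forall (x0 x1 : R) (u0 u1 : word (J:=J)),
     inI x0 -> inI x1 ->
     loc_reduced a ainv x0 u0 -> loc_reduced a ainv x1 u1 ->
     ~ wsrc a lo hi m u0 x0 -> ~ wsrc a lo hi m u1 x1 ->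
     (length u0 <= length u1)%nat ->
     eval a ainv x0 u0 = eval a ainv x1 u1 ->
     is_suffix u0 u1)
  /\
  (forall (t : R) (u v : word (J:=J)),
     inI t -> ~ in_some_foot a lo hi m t ->
     loc_reduced a ainv t u -> loc_reduced a ainv t v ->
     eval a ainv t u = eval a ainv t v ->
     u = v).
Proof.
  intros Hh Hb Hg. split.
  - apply part1; auto.
  - intros t u v Ht Hf Hu Hv E.
    destruct (Nat.le_ge_cases (length u) (length v)).
    + apply (part2_le a ainv lo hi m Hh Hb Hg t); auto.
    + symmetry. apply (part2_le a ainv lo hi m Hh Hb Hg t); auto.
Qed.
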